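(* Let $X\subset\mathbb{R}^n$ be a closed set which is the closure of its interior, $f:X\to\mathbb{R}^n$ locally Lipschitz, and suppose $\dot x=f(x)$ is forward complete with flow $\varphi_t$. Let $K$ be a closed convex cone with nonempty interior and suppose the system is strongly monotone in reversed time: for every $\xi_1,\xi_2\in X$ and every $t<0$ such that $\varphi_t(\xi_1),\varphi_t(\xi_2)$ are defined, $\xi_1\succ\xi_2$ implies $\varphi_t(\xi_1)\gg\varphi_t(\xi_2)$. Let $v\in\operatorname{int}(K)$, $|v|=1$, with $X$ invariant under translation by $v$ and $\varphi_t(\xi+\lambda v)=\varphi_t(\xi)+\lambda v$ for all $\lambda\in\mathbb{R}$, $\xi\in X$ and all $t$ at which $\varphi_t(\xi)$ is defined. Let $V(x)=\inf\{\alpha\in\mathbb{R}:x\preceq\alpha v\}$. Then for all $\xi_1,\xi_2\in X$ and all $t>0$, $$V(\varphi_t(\xi_1)-\varphi_t(\xi_2))\ge V(\xi_1-\xi_2),$$ and the inequality is strict whenever $\xi_1-\xi_2\notin\operatorname{span}\{v\}$.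
   Context: The cone $K$ satisfies $K+K\subset K$, $\alpha K\subset K$ for $\alpha\ge0$, $K\cap(-K)=\{0\}$. $\xi_1\succeq\xi_2$ iff $\xi_1-\xi_2\in K$; $\xi_1\succ\xi_2$ iff additionally $\xi_1\neq\xi_2$; $\xi_1\gg\xi_2$ iff $\xi_1-\xi_2\in\operatorname{int}(K)$. Forward complete means every solution is uniquely defined in $X$ on an interval containing $[0,\infty)$ in its interior. *)

(* Defs.v *)
From HB Require Import structures.
From mathcomp Require Import all_boot all_order all_algebra.
From mathcomp Require Import all_classical all_reals all_analysis.
Set Implicit Arguments. Unset Strict Implicit. Unset Printing Implicit Defensive.
Import Order.TTheory GRing.Theory Num.Theory.
Import numFieldNormedType.Exports.
Local Open Scope classical_set_scope.
Local Open Scope ring_scope.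

Section Defs.
Context {R : realType} {n : nat}.
Local Notation V := 'rV[R]_n.

Definition enorm (x : V) : R := Num.sqrt (\sum_(i < n) x ord0 i ^+ 2).

Definition closed_convex_cone (K : set V) : Prop :=
  [/\ closed K,
      (forall x y, K x -> K y -> K (x + y)),
      (forall (a : R) x, 0 <= a -> K x -> K (a *: x)),
      (forall x y (t : R), K x -> K y -> 0 <= t <= 1 -> K (t *: x + (1 - t) *: y))
    & (forall x, K x -> K (- x) -> x = 0)].

Definition cone_le (K : set V) (x y : V) : Prop := K (x - y).       (* x ⪰ y *)
Definition cone_lt (K : set V) (x y : V) : Prop := K (x - y) /\ x <> y. (* x ≻ y *)
Definition cone_ll (K : set V) (x y : V) : Prop := (interior K) (x - y). (* x ≫ y *)

Definition locally_lipschitz_on (X : set V) (f : V -> V) : Prop :=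
  forall x, X x -> exists r : R, exists L : R, 0 < r /\
    forall y z, X y -> X z -> `|y - x| < r -> `|z - x| < r ->
      `|f y - f z| <= L * `|y - z|.

Definition is_solution (X : set V) (f : V -> V) (I : set R) (x : R -> V) : Prop :=
  [/\ is_interval I,
      (forall s, I s -> X (x s)),
      {within I, continuous x}
    & (forall s, (interior I) s -> is_derive s 1 x (f (x s)))].

(** phi is the flow of the forward complete system x' = f(x) on X:
    dom xi is the maximal interval of existence of the (unique) solution
    through xi, and [0, +oo) lies in its interior. *)
Definition forward_complete_flow (X : set V) (f : V -> V)
    (phi : R -> V -> V) (dom : V -> set R) : Prop :=
  forall xi, X xi ->
  [/\ is_solution X f (dom xi) (fun t => phi t xi),
      phi 0 xi = xi,
      (forall t : R, 0 <= t -> (interior (dom xi)) t)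
    & (forall (J : set R) (y : R -> V), J 0 -> is_solution X f J y -> y 0 = xi ->
         forall t, J t -> dom xi t /\ y t = phi t xi)].

Definition Vfun (K : set V) (v : V) (x : V) : R :=
  inf [set alpha : R | cone_le K (alpha *: v) x].

End Defs.

(* Main.v *)
Require Import Defs.
From HB Require Import structures.
From mathcomp Require Import all_boot all_order all_algebra.
From mathcomp Require Import all_classical all_reals all_analysis.
Import Order.TTheory GRing.Theory Num.Theory.
Import numFieldNormedType.Exports.
Local Open Scope classical_set_scope.
Local Open Scope ring_scope.

Section S.
Context {R : realType} {n : nat}.
Local Notation V := 'rV[R]_n.
Lemma int_dir (K : set V) (w y : V) : (interior K) w ->
  exists2 c : R, 0 < c & K (w + c *: y).
Proof.
move=> hw.
have cg : {for 0, continuous (fun s : R => w + s *: y)}.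
  apply: continuousD; first exact: cvg_cst.
  by apply: continuousZr_tmp.
have : nbhs (0:R) ((fun s : R => w + s *: y) @^-1` K).
  apply: cg; by rewrite /= scale0r addr0.
move=> /nbhs_ballP [e /= e0 he].
exists (e / 2); first by rewrite divr_gt0.
apply: he; rewrite /ball /= sub0r normrN gtr0_norm ?divr_gt0 //.
by rewrite ltr_pdivrMr // ltr_pMr // ltr1n.
Qed.

Lemma shift_derive (F : R -> V) (s t : R) (d : V) :
  is_derive (s + t) 1 F d -> is_derive s 1 (fun u => F (u + t)) d.
Proof.
move=> [h1 h2].
have E : (fun h : R => h^-1 *: (((fun u => F (u + t)) \o shift s) (h *: 1) - F (s + t)))
   = (fun h : R => h^-1 *: ((F \o shift (s + t)) (h *: 1) - F (s + t))).
  by apply/funext => h /=; rewrite addrA.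
split.
  by rewrite /derivable E.
by rewrite /derive E.
Qed.

Lemma flow_back (X : set V) f phi dom (xi : V) (t : R) :
  forward_complete_flow X f phi dom -> X xi -> 0 < t ->
  X (phi t xi) /\ dom (phi t xi) (-t) /\ phi (-t) (phi t xi) = xi.
Proof.
move=> H Xxi t0.
have [[_ hX _ hD] h0 hint _] := H xi Xxi.
have Xy : X (phi t xi) by apply: hX; apply: interior_subset; apply: hint; exact: ltW.
have [_ _ _ hu] := H _ Xy.
have dJ : forall s, [set` `[-t, 0]] s -> is_derive s 1 (fun u => phi (u + t) xi) (f (phi (s + t) xi)).
  move=> s; rewrite /= in_itv /= => /andP [a b].
  apply: (shift_derive (fun u => phi u xi)); apply: hD; apply: hint.
  by rewrite -lerBlDr sub0r.
have := hu [set` `[-t, 0]] (fun u => phi (u + t) xi).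
case/(_ _ _ _ (-t)).
- by rewrite /= in_itv /= lexx oppr_le0 ltW.
- split.
  + exact: interval_is_interval.
  + move=> s; rewrite /= in_itv /= => /andP [a b].
    apply: hX; apply: interior_subset; apply: hint.
    by rewrite -lerBlDr sub0r.
  + apply: derivable_within_continuous => s; rewrite inE => hs.
    by have [] := dJ s hs.
  + by move=> s /interior_subset hs; apply: dJ.
- by rewrite add0r.
- by rewrite /= in_itv /= lexx oppr_le0 ltW.
- by move=> d <-; rewrite addNr h0.
Qed.

Section Vlemmas.
Variables (K : set V) (v : V).
Hypotheses (hK : closed_convex_cone K) (hv : (interior K) v) (v0 : v != 0).

Let S x := [set a : R | cone_le K (a *: v) x].

Lemma K0 : K 0.
Proof.
case: hK => _ _ hs _ _; rewrite -(scale0r v); apply: hs => //.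
exact: interior_subset.
Qed.

Lemma S_lb x : has_lbound (S x).
Proof.
case: hK => _ hadd hs _ hanti.
have [c c0 hc] := int_dir K v x hv.
exists (- c^-1) => a; rewrite /S /cone_le /= => ha.
have : 0 <= c * a + 1.
  rewrite leNgt; apply/negP => hneg.
  have K1 : K ((c * a + 1) *: v).
    have -> : (c * a + 1) *: v = c *: (a *: v - x) + (v + c *: x).
      by rewrite scalerBr scalerA scalerDl scale1r; rewrite addrA addrAC subrK addrC.
    by apply: hadd => //; apply: hs => //; exact: ltW.
  have K2 : K (- v).
    have -> : - v = (- (c * a + 1))^-1 *: ((c * a + 1) *: v).
      rewrite scalerA invrN mulNr mulVf ?scaleN1r //.
      by rewrite lt_eqF.
    apply: hs => //; rewrite invr_ge0 oppr_ge0; exact: ltW.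
  by move/eqP: v0; apply; apply: hanti => //; exact: interior_subset.
move=> h.
have : 0 <= a + c^-1.
  have -> : a + c^-1 = c^-1 * (c * a + 1).
    by rewrite mulrDr mulr1 mulrA mulVf ?mul1r // gt_eqF.
  by apply: mulr_ge0 => //; rewrite invr_ge0 ltW.
move=> ?; by rewrite -(lerD2r c^-1) addNr.

Qed.

Lemma S_ne x : S x !=set0.
Proof.
case: hK => _ hadd hs _ hanti.
have [c c0 hc] := int_dir K v (- x) hv.
exists c^-1; rewrite /S /cone_le /=.
have -> : c^-1 *: v - x = c^-1 *: (v + c *: - x).
  by rewrite scalerDr scalerA mulVf ?gt_eqF // scale1r.
by apply: hs => //; rewrite invr_ge0 ltW.
Qed.

Lemma V_le x a : cone_le K (a *: v) x -> Vfun K v x <= a.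
Proof. by move=> h; apply: (ge_inf (S_lb x)). Qed.

Lemma V_mem x : cone_le K (Vfun K v x *: v) x.
Proof.
case: hK => hcl _ _ _ _.
pose N := [set b : R | K ((- b) *: v - x)].
have EN : -%R @` S x = N.
  apply/seteqP; split => b.
    by case=> a ha <-; rewrite /N /= opprK.
  by move=> hb; exists (- b); rewrite // opprK.
have cN : closed N.
  apply: (@preimage_closed _ _ (fun b : R => (- b) *: v - x)) => // b _.
  apply: cvgB; last exact: cvg_cst.
  apply: cvgZr_tmp; apply: cvgN; exact: cvg_id.
have [l hl] := S_lb x.
have N0 : N !=set0 by rewrite -EN; case: (S_ne x) => a ha; exists (- a); exists a.
have uN : has_ubound N.
  exists (- l) => b; rewrite /N /= => hb.
  by rewrite lerNr; apply: hl; rewrite /S /cone_le /=.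
have := closure_sup N0 uN.
rewrite -(proj1 (closure_id N) cN) /N /= => h.
by rewrite /cone_le /Vfun /inf -/(S x) EN.
Qed.

Lemma V_lt x a : (interior K) (a *: v - x) -> Vfun K v x < a.
Proof.
move=> h; have [c c0 hc] := int_dir K _ (- v) h.
apply: (@le_lt_trans _ _ (a - c)); last by rewrite ltrBlDr ltrDl.
apply: V_le; rewrite /cone_le.
have -> : (a - c) *: v - x = a *: v - x + c *: - v by rewrite scalerBl scalerN addrAC.
exact: hc.
Qed.

End Vlemmas.
End S.

Theorem corollary1 (R : realType) (n : nat) (X : set 'rV[R]_n)
  (f : 'rV[R]_n -> 'rV[R]_n) (phi : R -> 'rV[R]_n -> 'rV[R]_n)
  (dom : 'rV[R]_n -> set R) (K : set 'rV[R]_n) (v : 'rV[R]_n) :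
  closed X ->
  closure (interior X) = X ->
  locally_lipschitz_on X f ->
  forward_complete_flow X f phi dom ->
  closed_convex_cone K ->
  interior K !=set0 ->
  (forall xi1 xi2 (t : R), X xi1 -> X xi2 -> t < 0 -> dom xi1 t -> dom xi2 t ->
     cone_lt K xi1 xi2 -> cone_ll K (phi t xi1) (phi t xi2)) ->
  (interior K) v ->
  enorm v = 1 ->
  (forall xi (lambda : R), X xi -> X (xi + lambda *: v)) ->
  (forall xi (lambda : R) (t : R), X xi -> dom xi t ->
     dom (xi + lambda *: v) t /\ phi t (xi + lambda *: v) = phi t xi + lambda *: v) ->
  forall xi1 xi2 (t : R), X xi1 -> X xi2 -> 0 < t ->
    Vfun K v (xi1 - xi2) <= Vfun K v (phi t xi1 - phi t xi2) /\
    ((~ exists lambda : R, xi1 - xi2 = lambda *: v) ->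
       Vfun K v (xi1 - xi2) < Vfun K v (phi t xi1 - phi t xi2)).
Proof.
move=> _ _ _ hflow hK _ hmono hv hnorm hXt htrans xi1 xi2 t X1 X2 t0.
have v0 : v != 0.
  apply/eqP => v0; move: hnorm; rewrite v0 /enorm.
  rewrite big1 ?sqrtr0 => [/eqP|i _]; first by rewrite eq_sym oner_eq0.
  by rewrite mxE expr0n.
have [Xy1 [d1 e1]] := flow_back _ _ _ _ _ _ hflow X1 t0.
have [Xy2 [d2 e2]] := flow_back _ _ _ _ _ _ hflow X2 t0.
set y1 := phi t xi1 in Xy1 d1 e1 *; set y2 := phi t xi2 in Xy2 d2 e2 *.
set b := Vfun K v (y1 - y2).
have hb : K (b *: v - (y1 - y2)) := V_mem _ _ hK hv v0 (y1 - y2).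
have [dz ez] := htrans y2 b (-t) Xy2 d2.
rewrite e2 in ez.
case: (eqVneq (y2 + b *: v) y1) => hz.
  have hx : xi1 - xi2 = b *: v by rewrite -e1 -hz ez addrAC subrr add0r.
  have hle : Vfun K v (xi1 - xi2) <= b.
    by apply: (V_le _ _ hK hv v0); rewrite /cone_le hx subrr; exact: (K0 _ _ hK hv).
  split => // hn; exfalso; apply: hn; exists b; exact: hx.
have Xz : X (y2 + b *: v) by apply: hXt.
have hlt : cone_lt K (y2 + b *: v) y1.
  split; last exact/eqP.
  rewrite /cone_le.
  have -> : y2 + b *: v - y1 = b *: v - (y1 - y2) by rewrite opprB addrAC addrC.
  exact: hb.
have := hmono _ _ (-t) Xz Xy1 _ dz d1 hlt.
rewrite oppr_lt0 => /(_ t0); rewrite /cone_ll ez e1.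
have -> : xi2 + b *: v - xi1 = b *: v - (xi1 - xi2) by rewrite opprB addrAC addrC.
move/(V_lt _ _ hK hv v0) => h.
by split => //; apply: ltW.
Qed.
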